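(* Let $B\in\Gamma^q_u$ be an affine binarization polytope. Then there exists a linear binarization polytope $B'\in\Gamma^q_u$ such that $B'=h(B)$ for some unimodular transformation $h:\mathbb{R}^{1+q}\to\mathbb{R}^{1+q}$.
   Context: For positive integers $q,u$, $\Gamma^q_u$ is the set of rational polytopes $B\subseteq\{(x,z)\in\mathbb{R}\times[0,1]^q:0\le x\le u\}$ with $\operatorname{proj}_x(B\cap(\mathbb{R}\times\{0,1\}^q))=\{0,1,\dots,u\}$ (binarization polytopes). $B$ is affine if there are $\alpha\in\mathbb{R}^q$ and $\alpha_0\in\mathbb{R}$ with $x=\alpha^Tz+\alpha_0$ for all $(x,z)\in B$; it is linear if this holds with $\alpha_0=0$. A unimodular transformation of $\mathbb{R}^N$ is a map $y\mapsto Uy+v$ with $U$ an integral $N\times N$ matrix of determinant $\pm1$ and $v\in\mathbb{Z}^N$. *)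

(* Defs.v *)
(* Points of R^{1+q} are column vectors 'cV[R]_(1 + q);
   coordinate lshift q ord0 is x, coordinate rshift 1 j is z_j. *)
From HB Require Import structures.
From mathcomp Require Import all_boot all_order all_algebra.
From mathcomp Require Import reals.
Set Implicit Arguments. Unset Strict Implicit. Unset Printing Implicit Defensive.
Import Order.TTheory GRing.Theory Num.Theory.
Local Open Scope ring_scope.

Section Defs.
Variable R : realType.
Variable q : nat.

Definition pt := 'cV[R]_(1 + q).

Definition xc (p : pt) : R := p (lshift q ord0) 0.
Definition zc (p : pt) (j : 'I_q) : R := p (rshift 1 j) 0.

Definition is_rat (r : R) : Prop := exists c : rat, r = ratr c.

Definition conv_hull (V : seq pt) (p : pt) : Prop :=
  exists lam : 'I_(size V) -> R,
    (forall i, 0 <= lam i) /\ \sum_i lam i = 1 /\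
    p = \sum_i lam i *: V`_i.

Definition rational_polytope (B : pt -> Prop) : Prop :=
  exists V : seq pt,
    (forall v, v \in V -> forall i j, is_rat (v i j)) /\
    (forall p, B p <-> conv_hull V p).

Definition binarization_polytope (u : nat) (B : pt -> Prop) : Prop :=
  rational_polytope B /\
  (forall p, B p -> 0 <= xc p <= u%:R /\ (forall j, 0 <= zc p j <= 1)) /\
  (forall x : R,
     (exists p, B p /\ xc p = x /\ (forall j, zc p j = 0 \/ zc p j = 1)) <->
     (exists k : nat, (k <= u)%N /\ x = k%:R)).

Definition affine_bp (B : pt -> Prop) : Prop :=
  exists (alpha : 'I_q -> R) (alpha0 : R),
    forall p, B p -> xc p = \sum_j alpha j * zc p j + alpha0.

Definition linear_bp (B : pt -> Prop) : Prop :=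
  exists alpha : 'I_q -> R,
    forall p, B p -> xc p = \sum_j alpha j * zc p j.

Definition unimodular (U : 'M[int]_(1 + q)) : Prop :=
  \det U = 1 \/ \det U = -1.

Definition utrans (U : 'M[int]_(1 + q)) (v : 'cV[int]_(1 + q)) (y : pt) : pt :=
  map_mx intr U *m y + map_mx intr v.

End Defs.

(* Main.v *)
Require Import Defs.
From HB Require Import structures.
From mathcomp Require Import all_boot all_order all_algebra.
From mathcomp Require Import reals ring lra.
Import Order.TTheory GRing.Theory Num.Theory.
Local Open Scope ring_scope.

Definition flip (q : nat) (s : 'I_q -> bool) (i : 'I_(1+q)) : bool :=
  if split i is inr j then s j else false.

Arguments flip {q}.
Definition hmap (R : realType) (q : nat) (s : 'I_q -> bool) (p : pt R q) : pt R q :=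
  \col_i (if flip s i then 1 - p i 0 else p i 0).

Lemma flipL q s : @flip q s (lshift q ord0) = false.
Proof. by rewrite /flip (unsplitK (inl ord0 : 'I_1 + 'I_q)). Qed.
Lemma flipR q s j : @flip q s (rshift 1 j) = s j.
Proof. by rewrite /flip (unsplitK (inr j : 'I_1 + 'I_q)). Qed.

Arguments hmap {R q}.
Lemma hK R q s (p : pt R q) : hmap s (hmap s p) = p.
Proof.
apply/matrixP => i j; rewrite !mxE (ord1 j); case: flip => //; ring.
Qed.

Lemma xc_h R q s (p : pt R q) : xc (hmap s p) = xc p.
Proof. by rewrite /xc mxE flipL. Qed.

Lemma zc_h R q s (p : pt R q) j :
  zc (hmap s p) j = if s j then 1 - zc p j else zc p j.
Proof. by rewrite /zc mxE flipR. Qed.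

Definition Ud q (s : 'I_q -> bool) : 'M[int]_(1+q) :=
  diag_mx (\row_i (if flip s i then -1 else 1)).
Arguments Ud {q}.
Definition vd q (s : 'I_q -> bool) : 'cV[int]_(1+q) :=
  \col_i (if flip s i then 1 else 0).

Arguments vd {q}.
Lemma utrans_h R q s (p : pt R q) : utrans (Ud s) (vd s) p = hmap s p.
Proof.
rewrite /utrans /Ud map_diag_mx mul_diag_mx.
apply/matrixP => i j; rewrite !mxE (ord1 j).
case: flip => /=; rewrite ?rmorphN ?rmorph1 ?rmorph0; ring.
Qed.

Lemma Ud_uni q s : unimodular (@Ud q s).
Proof.
rewrite /unimodular /Ud det_diag.
apply: (big_ind (fun x : int => x = 1 \/ x = -1)).
- by left.
- by move=> x y [->|->] [->|->]; rewrite ?mulr1 ?mulrN1 ?opprK; auto.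
- by move=> i _; rewrite mxE; case: flip; auto.
Qed.
Lemma h_conv R q s (V : seq (pt R q)) p :
  conv_hull V p -> conv_hull (map (hmap s) V) (hmap s p).
Proof.
case=> lam [lam0 [lam1 ->]].
pose lamn (k : nat) : R := if insub k is Some i then lam i else 0.
have lamE (i : 'I_(size V)) : lam i = lamn i by rewrite /lamn valK.
exists (fun i => lamn i); split; first by move=> i; rewrite /lamn; case: insub.
have sE : \sum_(i < size (map (hmap s) V)) lamn i = \sum_(i < size V) lam i.
  rewrite -(big_mkord xpredT lamn) size_map big_mkord.
  by apply: eq_bigr => i _; rewrite lamE.
split; first by rewrite sE.
apply/matrixP => i j; rewrite (ord1 j) [in RHS]summxE.
have -> : \sum_(k < size (map (hmap s) V)) (lamn k *: (map (hmap s) V)`_k) i 0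
   = \sum_(k < size V) lam k * (hmap s V`_k) i 0.
  rewrite -(big_mkord xpredT (fun k => (lamn k *: (map (hmap s) V)`_k) i 0)).
  rewrite size_map big_mkord; apply: eq_bigr => k _.
  by rewrite mxE (nth_map 0) // lamE.
rewrite mxE summxE.
under eq_bigr do rewrite mxE.
under [X in _ = X]eq_bigr do rewrite mxE.
case: flip => //.
rewrite -[X in X - _]lam1 -sumrB.
by apply: eq_bigr => k _; rewrite mulrBr mulr1.
Qed.
Theorem proposition2 (R : realType) (q u : nat) (hq : (0 < q)%N) (hu : (0 < u)%N)
    (B : pt R q -> Prop) :
  binarization_polytope u B -> affine_bp B ->
  exists B' : pt R q -> Prop,
    binarization_polytope u B' /\ linear_bp B' /\
    exists (U : 'M[int]_(1 + q)) (v : 'cV[int]_(1 + q)),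
      unimodular U /\
      (forall y, B' y <-> exists p, B p /\ y = utrans U v p).
Proof.
move=> [[V [Vrat Vconv]] [Hbnd Hbin]] [alpha [alpha0 Haff]].
have [p0 [Bp0 [x0 bin0]]] : exists p, B p /\ xc p = 0 /\
    (forall j, zc p j = 0 \/ zc p j = 1).
  by apply/(Hbin 0); exists 0%N.
pose s j := zc p0 j == 1.
have zp0 j : zc p0 j = if s j then 1 else 0.
  rewrite /s; case: eqP => // H; by case: (bin0 j).
exists (fun y => B (hmap s y)); split; [|split].
- split; [|split].
  + exists (map (hmap s) V); split.
    * move=> v /mapP [w wV ->] i j; rewrite mxE.
      case: (Vrat w wV i 0) => c ->; case: flip; last by exists c.
      by exists (1 - c); rewrite rmorphB rmorph1.
    * move=> y; split.
        by move=> /Vconv /(@h_conv _ _ s _ _); rewrite hK.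
      move=> /(@h_conv _ _ s _ _) H; apply/Vconv.
      suff <- : map (hmap s) (map (hmap s) V) = V by [].
      by rewrite -map_comp -[RHS]map_id; apply: eq_map => w /=; rewrite hK.
  + move=> y By; have [H1 H2] := Hbnd _ By.
    rewrite xc_h in H1; split => // j.
    have := H2 j; rewrite zc_h; case: (s j); lra.
  + move=> x; rewrite -Hbin; split.
    * move=> [p [Bp [xp bp]]]; exists (hmap s p); split => //.
      rewrite xc_h; split => // j; rewrite zc_h.
      by case: (s j); case: (bp j) => ->; rewrite ?subr0 ?subrr; auto.
    * move=> [p [Bp [xp bp]]]; exists (hmap s p); split; first by rewrite hK.
      rewrite xc_h; split => // j; rewrite zc_h.
      by case: (s j); case: (bp j) => ->; rewrite ?subr0 ?subrr; auto.
- exists (fun j => if s j then - alpha j else alpha j) => y By.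
  have H1 := Haff _ By; have H0 := Haff _ Bp0.
  rewrite xc_h in H1; rewrite x0 in H0.
  suff E : (\sum_j alpha j * zc (hmap s y) j + alpha0) -
     (\sum_j alpha j * zc p0 j + alpha0) =
     \sum_j (if s j then - alpha j else alpha j) * zc y j by lra.
  have -> : forall a b c : R, (a + c) - (b + c) = a - b by move=> *; ring.
  rewrite -sumrB; apply: eq_bigr => j _; rewrite zc_h zp0.
  case: (s j); ring.
- exists (Ud s), (vd s); split; first exact: Ud_uni.
  move=> y; split.
    by move=> By; exists (hmap s y); rewrite utrans_h hK.
  by move=> [p [Bp ->]]; rewrite utrans_h hK.
Qed.
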